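(* Let $n$ be a natural number, $P$ a polytope, and $f\in\operatorname{vert}(P,\triangle_n)$. Then there exists a face $G\subset\triangle_n$ such that $\dim f(P)=\dim G$, $f(P)\subset G$, and every facet of $G$ contains a facet of $f(P)$.
   Context: For convex polytopes $P,Q$, $\operatorname{Hom}(P,Q)$ is the set of maps $P\to Q$ that are restrictions of affine maps $\operatorname{Aff}(P)\to\operatorname{Aff}(Q)$; it is a convex polytope in the affine space of affine maps $\operatorname{Aff}(P)\to\operatorname{Aff}(Q)$, and $\operatorname{vert}(P,Q)$ denotes its set of vertices. $\triangle_n=\operatorname{conv}(0,e_1,\ldots,e_n)\subset\mathbb{R}^n$. A facet of a polytope is a face of codimension one in it. *)

(* Defs.v *)
From HB Require Import structures.
From mathcomp Require Import all_boot all_order all_algebra.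
From mathcomp Require Import boolp classical_sets.
From mathcomp Require Import reals.
Set Implicit Arguments. Unset Strict Implicit. Unset Printing Implicit Defensive.
Import Order.TTheory GRing.Theory Num.Theory.
Local Open Scope ring_scope.
Local Open Scope classical_set_scope.

Section Polytopes.
Variable R : realType.

Definition conv (d : nat) (V : seq 'rV[R]_d) : set 'rV[R]_d :=
  [set x | exists w : 'I_(size V) -> R,
     (forall i, 0 <= w i) /\ \sum_i w i = 1 /\ x = \sum_i w i *: V`_i].

Definition simplex (n : nat) : set 'rV[R]_n :=
  conv (0 :: [seq delta_mx 0 i | i <- enum 'I_n]).

Definition is_affine (m n : nat) (f : 'rV[R]_m -> 'rV[R]_n) : Prop :=
  exists (A : 'M[R]_(m, n)) (b : 'rV[R]_n), forall x, f x = x *m A + b.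

(* f (as a map on P) belongs to Hom(P,Q): restriction to P of an affine map
   with f(P) contained in Q.  Two such maps are the same element of Hom(P,Q)
   iff they agree on P. *)
Definition in_Hom (m n : nat) (P : set 'rV[R]_m) (Q : set 'rV[R]_n)
  (f : 'rV[R]_m -> 'rV[R]_n) : Prop :=
  is_affine f /\ f @` P `<=` Q.

Definition is_vert (m n : nat) (P : set 'rV[R]_m) (Q : set 'rV[R]_n)
  (f : 'rV[R]_m -> 'rV[R]_n) : Prop :=
  in_Hom P Q f /\
  forall (g h : 'rV[R]_m -> 'rV[R]_n) (t : R),
    in_Hom P Q g -> in_Hom P Q h -> 0 < t -> t < 1 ->
    (forall x, P x -> f x = t *: g x + (1 - t) *: h x) ->
    forall x, P x -> g x = h x.

(* S contains k+1 affinely independent points *)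
Definition aff_indep (n : nat) (S : set 'rV[R]_n) (k : nat) : Prop :=
  exists X : 'M[R]_(k.+1, n), (forall i, S (row i X)) /\
    row_free (\matrix_(i < k) (row (lift ord0 i) X - row ord0 X)).

(* affine dimension (dim of the affine hull), -1 for the empty set *)
Definition adim (n : nat) (S : set 'rV[R]_n) : int :=
  ((\max_(k < n.+1 | `[< aff_indep S k >]) k.+1)%N)%:Z - 1.

(* faces of a convex set K: intersections with supporting hyperplanes
   (c = 0 gives K itself or the empty face) *)
Definition face (n : nat) (K F : set 'rV[R]_n) : Prop :=
  exists (c : 'cV[R]_n) (b : R),
    (forall x, K x -> (x *m c) 0 0 <= b) /\
    F = K `&` [set x | (x *m c) 0 0 = b].

Definition facet (n : nat) (K F : set 'rV[R]_n) : Prop :=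
  face K F /\ adim F = adim K - 1.

End Polytopes.

(* Main.v *)
Require Import Defs.
From mathcomp Require Import all_boot all_order all_algebra.
From mathcomp Require Import boolp classical_sets reals.
From mathcomp.algebra_tactics Require Import ring lra.
Set Implicit Arguments. Unset Strict Implicit. Unset Printing Implicit Defensive.
Import Order.TTheory GRing.Theory Num.Theory.
Local Open Scope ring_scope.
Local Open Scope classical_set_scope.

Section Basics.
Variables (R : realType) (n : nat).

Definition Mn : 'M[R]_(n, 1+n) := row_mx (const_mx (-1)) 1%:M.
Definition y0 : 'rV[R]_(1+n) := row_mx (const_mx 1) 0.
Definition Y (z : 'rV[R]_n) : 'rV[R]_(1+n) := z *m Mn + y0.

Lemma YL z : Y z 0 (lshift n 0) = 1 - \sum_i z 0 i.
Proof.
rewrite /Y /Mn /y0 mxE mul_mx_row !row_mxEl !mxE addrC; congr (_ + _).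
rewrite -sumrN; apply: eq_bigr => i _; rewrite !mxE mulrN1.
by [].
Qed.

Lemma YR z i : Y z 0 (rshift 1 i) = z 0 i.
Proof.
by rewrite /Y /Mn /y0 mxE mul_mx_row !row_mxEr mulmx1 mxE addr0.
Qed.

Lemma Ysum z : \sum_j Y z 0 j = 1.
Proof.
rewrite big_split_ord /= big_ord1 YL.
under eq_bigr do rewrite YR.
by rewrite subrK.
Qed.

Lemma rsubY z : rsubmx (Y z) = z.
Proof. by apply/rowP => i; rewrite mxE YR. Qed.

Lemma YK (u : 'rV[R]_(1+n)) : \sum_j u 0 j = 1 -> Y (rsubmx u) = u.
Proof.
move=> hs; apply/rowP => j; rewrite -(splitK j); case: (split j) => k /=.
  rewrite (ord1 k) YL -hs big_split_ord /= big_ord1.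
  under [X in _ - X]eq_bigr do rewrite mxE.
  by rewrite addrK.
by rewrite YR mxE.
Qed.

Lemma Mn_inj (z : 'rV[R]_n) : z *m Mn = 0 -> z = 0.
Proof.
move=> h; have := congr1 rsubmx h.
by rewrite /Mn mul_mx_row row_mxKr mulmx1 => ->; apply/rowP => i; rewrite !mxE.
Qed.

Lemma YB z1 z2 : Y z1 - Y z2 = (z1 - z2) *m Mn.
Proof. by rewrite /Y mulmxBl opprD addrACA subrr addr0. Qed.

End Basics.


Section Conv.
Variables (R : realType) (m k : nat) (V : seq 'rV[R]_m).

Lemma conv_aff (M : 'M[R]_(m,k)) (v : 'rV[R]_k) x : conv V x ->
  exists w : 'I_(size V) -> R, (forall i, 0 <= w i) /\ \sum_i w i = 1 /\
    x *m M + v = \sum_i w i *: (V`_i *m M + v).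
Proof.
case=> w [w0 [w1 ->]]; exists w; split => //; split => //.
under [RHS]eq_bigr do rewrite scalerDr.
rewrite big_split /= -scaler_suml w1 scale1r mulmx_suml; congr (_ + _).
by apply: eq_bigr => i _; rewrite scalemxAl.
Qed.

Lemma conv_ge0 (M : 'M[R]_(m,k)) (v : 'rV[R]_k) x j :
  (forall i : 'I_(size V), 0 <= (V`_i *m M + v) 0 j) -> conv V x ->
  0 <= (x *m M + v) 0 j.
Proof.
move=> h /(conv_aff M v) [w [w0 [w1 ->]]]; rewrite summxE.
by apply: sumr_ge0 => i _; rewrite mxE mulr_ge0.
Qed.

Lemma conv_eq0 (M : 'M[R]_(m,k)) (v : 'rV[R]_k) x j :
  (forall i : 'I_(size V), (V`_i *m M + v) 0 j = 0) -> conv V x ->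
  (x *m M + v) 0 j = 0.
Proof.
move=> h /(conv_aff M v) [w [w0 [w1 ->]]]; rewrite summxE.
by apply: big1 => i _; rewrite mxE h mulr0.
Qed.

Lemma mem_conv (i : 'I_(size V)) : conv V V`_i.
Proof.
exists (fun j => (j == i)%:R); split; first by move=> j; rewrite ler0n.
split.
  by rewrite (bigD1 i) //= eqxx big1 ?addr0 // => j /negPf ->.
rewrite (bigD1 i) //= eqxx scale1r big1 ?addr0 // => j /negPf ->.
by rewrite scale0r.
Qed.

End Conv.

Section Simp.
Variables (R : realType) (n : nat).

Lemma sim_iff (z : 'rV[R]_n) : simplex z <-> forall j, 0 <= Y z 0 j.
Proof.
split.
  move=> hz j; rewrite /Y; move: hz; apply: conv_ge0 => i.
  set s := (X in X`_i).
  have : s`_i \in s by apply: mem_nth.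
  rewrite in_cons => /orP [/eqP -> | /mapP [k _ ->]].
    by rewrite mul0mx add0r /y0 -(splitK j); case: (split j) => a /=;
      rewrite ?row_mxEl ?row_mxEr !mxE ?ler01.
  rewrite -/(Y _) -(splitK j); case: (split j) => a /=.
    rewrite (ord1 a) YL (bigD1 k) //= mxE !eqxx /= big1 ?addr0 ?subrr //.
    by move=> c /negPf; rewrite mxE eq_sym => ->; rewrite andbF.
  by rewrite YR mxE ler0n.
move=> hY; rewrite /simplex /conv /=.
set ds := [seq _ | i <- enum 'I_n].
set s := (0 :: _).
have e : size ds = n :> nat by rewrite size_map size_enum_ord.
pose w (i : 'I_(size s)) : R :=
  oapp (fun k => z 0 (cast_ord e k)) (1 - \sum_i z 0 i) (unlift ord0 i).
exists w; split.
  move=> i; rewrite /w; case: (unlift ord0 i) => [k|] /=.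
    by have := hY (rshift 1 (cast_ord e k)); rewrite YR.
  by have := hY (lshift n 0); rewrite YL.
have rei (F : 'I_n -> 'rV[R]_n) :
    \sum_(i < size ds) F (cast_ord e i)
    = \sum_i F i.
  rewrite (reindex (cast_ord (esym e))) /=; last first.
    by exists (cast_ord e) => i _; rewrite ?cast_ordK ?cast_ordKV.
  by apply: eq_bigr => i _; rewrite cast_ordKV.
have reiR (F : 'I_n -> R) :
    \sum_(i < size ds) F (cast_ord e i)
    = \sum_i F i.
  rewrite (reindex (cast_ord (esym e))) /=; last first.
    by exists (cast_ord e) => i _; rewrite ?cast_ordK ?cast_ordKV.
  by apply: eq_bigr => i _; rewrite cast_ordKV.
have wl (i : 'I_(size ds)) : w (lift ord0 i) = z 0 (cast_ord e i).
  by rewrite /w (@liftK (size ds).+1 ord0 i).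
split.
  rewrite big_ord_recl {1}/w unlift_none /=.
  rewrite (eq_bigr (fun i => z 0 (cast_ord e i))) ?reiR ?subrK //.
rewrite big_ord_recl {1}/w unlift_none /= scaler0 add0r.
rewrite (eq_bigr (fun i : 'I_(size ds) => z 0 (cast_ord e i) *: ds`_i)); last first.
  by move=> i _; rewrite -wl.
transitivity (\sum_(i < size ds)
   (fun k => z 0 k *: (delta_mx 0 k : 'rV[R]_n)) (cast_ord e i)).
  by rewrite (rei (fun k => z 0 k *: delta_mx 0 k)) -row_sum_delta.
apply: eq_bigr => i _ /=; congr (_ *: _).
have hi : (i < n)%N by apply: (leq_trans (ltn_ord i)); rewrite e.
rewrite (nth_map (cast_ord e i)) ?size_enum_ord //.
by congr delta_mx; apply: val_inj => /=; rewrite nth_enum_ord.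
Qed.

End Simp.


Section Dim.
Variables (R : realType) (n : nat).

Definition Ymx k (X : 'M[R]_(k, n)) : 'M[R]_(k, 1+n) :=
  X *m @Mn R n + const_mx 1 *m @y0 R n.

Lemma row_Ymx k (X : 'M[R]_(k, n)) i : row i (Ymx X) = Y (row i X).
Proof.
apply/rowP => j; rewrite /Ymx /Y !mxE big_ord1 !mxE mul1r; congr (_ + _).
by apply: eq_bigr => l _; rewrite !mxE.
Qed.

Lemma Ymx_sum k (X : 'M[R]_(k, n)) : Ymx X *m const_mx 1 = const_mx 1 :> 'cV[R]_k.
Proof.
apply/colP => i; rewrite [LHS]mxE [RHS]mxE -[RHS](Ysum (row i X)).
apply: eq_bigr => j _; by rewrite [const_mx _ _ _]mxE mulr1 -row_Ymx [RHS]mxE.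
Qed.

Definition Emx k : 'M[R]_(k, k.+1) :=
  \matrix_(i < k) (delta_mx 0 (lift ord0 i) - delta_mx 0 ord0).

Lemma D_E k (X : 'M[R]_(k.+1, n)) :
  \matrix_(i < k) (row (lift ord0 i) X - row ord0 X) = Emx k *m X.
Proof.
by apply/row_matrixP => i; rewrite rowK row_mul rowK mulmxBl -!rowE.
Qed.

Lemma E_sum k : Emx k *m const_mx 1 = 0 :> 'cV[R]_k.
Proof.
apply/row_matrixP => i; rewrite row_mul rowK mulmxBl -!rowE !row_const.
by rewrite subrr; apply/rowP => j; rewrite !mxE.
Qed.

Lemma wE_lift k (w : 'rV[R]_k) i : (w *m Emx k) 0 (lift ord0 i) = w 0 i.
Proof.
rewrite mulmx_sum_row summxE (bigD1 i) //= rowK !mxE eqxx /=.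
rewrite eqxx subr0 mulr1 big1 ?addr0 // => l hl.
rewrite rowK !mxE /= (inj_eq lift_inj) eq_sym (negPf hl).
by rewrite subrr mulr0.
Qed.

Lemma wE_0 k (w : 'rV[R]_k) : (w *m Emx k) 0 ord0 = - \sum_i w 0 i.
Proof.
rewrite mulmx_sum_row summxE -sumrN; apply: eq_bigr => l _.
rewrite rowK !mxE /=.
by rewrite sub0r mulrN1.
Qed.

Lemma wE_eq k (w : 'rV[R]_(k.+1)) : w *m (const_mx 1 : 'cV[R]_k.+1) = 0 ->
  (\row_(i < k) w 0 (lift ord0 i)) *m Emx k = w.
Proof.
move=> /matrixP /(_ 0 0); rewrite !mxE big_ord_recl /= => hs.
apply/rowP => j; case: (unliftP ord0 j) => [i|] ->.
  by rewrite wE_lift mxE.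
rewrite wE_0 (eq_bigr (fun i => w 0 (lift ord0 i))); last by move=> i _; rewrite mxE.
move: hs; rewrite !mxE mulr1 (eq_bigr (fun i => w 0 (lift ord0 i))); last first.
  by move=> i _; rewrite ?mxE ?mulr1.
move/eqP; rewrite addr_eq0 => /eqP ->; congr (- _); apply: eq_bigr => i _; by rewrite mxE mulr1.
Qed.

Lemma free_D_Y k (X : 'M[R]_(k.+1, n)) :
  row_free (Emx k *m X) = row_free (Ymx X).
Proof.
apply/idP/idP => hf.
  apply/inj_row_free => w hw.
  have s0 : w *m (const_mx 1 : 'cV[R]_k.+1) = 0 by rewrite -(Ymx_sum X) mulmxA hw mul0mx.
  have wX : w *m X = 0.
    apply: Mn_inj; move: hw; rewrite /Ymx mulmxDr !mulmxA s0 mul0mx addr0.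
    by [].
  move: wX; rewrite -(wE_eq s0) -mulmxA => /eqP; rewrite mulmx_free_eq0 //.
  by move=> /eqP ->; rewrite mul0mx.
apply/inj_row_free => w hw.
set u := w *m Emx k.
have hu : u *m Ymx X = 0.
  rewrite /Ymx mulmxDr !mulmxA /u -(mulmxA w) hw mul0mx add0r.
  by rewrite -(mulmxA w) E_sum mulmx0 mul0mx.
move: hu => /eqP; rewrite mulmx_free_eq0 // => /eqP hu0.
apply/rowP => i; rewrite -(wE_lift w i) -/u hu0 !mxE //.
Qed.

End Dim.


Section Adim.
Variables (R : realType) (n : nat).
Implicit Types S : set 'rV[R]_n.

Lemma aff_indep_le S k : aff_indep S k -> (k <= n)%N.
Proof. by case=> X [_ /eqP <-]; apply: rank_leq_col. Qed.

Lemma adim_max S N : (forall k, aff_indep S k -> (k < N)%N) ->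
  ((\max_(k < n.+1 | `[< aff_indep S k >]) k.+1) <= N)%N.
Proof. by move=> hU; apply/bigmax_leqP => k /asboolP /hU. Qed.

Lemma adimE S N : (forall k, aff_indep S k -> (k < N)%N) ->
  ((0 < N)%N -> aff_indep S N.-1) -> adim S = N%:Z - 1.
Proof.
move=> hU hL; rewrite /adim; congr (_ - _); congr Posz; apply/eqP.
rewrite eqn_leq adim_max //=.
case: N hU hL => [|k] // hU /(_ isT) hk.
have hkn : (k < n.+1)%N by rewrite ltnS; apply: aff_indep_le hk.
have := @leq_bigmax_cond _ (fun i : 'I_n.+1 => `[< aff_indep S i >])
   (fun i : 'I_n.+1 => i.+1) (Ordinal hkn).
by apply; apply/asboolP.
Qed.

Lemma adim_le S N : (forall k, aff_indep S k -> (k < N)%N) ->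
  adim S <= N%:Z - 1.
Proof. by move=> hU; rewrite /adim lerD2r lez_nat adim_max. Qed.

Definition S1 (K : {set 'I_(1+n)}) : 'M[R]_(1+n, #|K|) :=
  \matrix_(j, l) ((j == enum_val l)%:R).

Lemma mulS1 k K (M : 'M[R]_(k, 1+n)) i l : (M *m S1 K) i l = M i (enum_val l).
Proof.
rewrite !mxE (bigD1 (enum_val l)) //= !mxE eqxx mulr1 big1 ?addr0 // => j hj.
by rewrite !mxE (negPf hj) mulr0.
Qed.

Lemma UB S (K : {set 'I_(1+n)}) k :
  (forall z, S z -> forall j, j \notin K -> Y z 0 j = 0) ->
  aff_indep S k -> (k < #|K|)%N.
Proof.
move=> hS [X [hX]]; rewrite D_E free_D_Y => hY.
have e : Ymx X = Ymx X *m S1 K *m (S1 K)^T.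
  apply/matrixP => i j; rewrite [RHS]mxE.
  under eq_bigr do rewrite mulS1 [(S1 K)^T _ _]mxE [S1 K _ _]mxE.
  case hj : (j \in K).
    rewrite (bigD1 (enum_rank_in hj j)) //= enum_rankK_in // eqxx mulr1.
    rewrite big1 ?addr0 // => l hl; case: eqP => [hjl|]; last by rewrite mulr0.
    by case/eqP: hl; apply: enum_val_inj; rewrite enum_rankK_in // hjl.
  rewrite big1; last first.
    move=> l _; case: eqP => [hjl|]; last by rewrite mulr0.
    by move: (enum_valP l); rewrite -hjl hj.
  have := row_Ymx X i => /matrixP /(_ 0 j); rewrite mxE => ->.
  by rewrite hS ?hj.
have hf : row_free (Ymx X *m S1 K).
  apply/inj_row_free => w hw; apply/eqP.
  by rewrite -(mulmx_free_eq0 _ hY) e !mulmxA -(mulmxA w) hw mul0mx.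
by move: (rank_leq_col (Ymx X *m S1 K)); rewrite (eqP hf).
Qed.

End Adim.


Section LB.
Variables (R : realType) (n : nat).

Lemma LB_lin (S : set 'rV[R]_n) N (Lv : 'I_N -> 'rV[R]_(1+n)) (W : pred 'I_N)
  (K : {set 'I_(1+n)}) :
  (forall i, W i -> \sum_j Lv i 0 j = 1) ->
  (forall i, W i -> S (rsubmx (Lv i))) ->
  (forall a : 'I_(1+n) -> R, (forall i, W i -> \sum_j a j * Lv i 0 j = 0) ->
     forall j, j \in K -> a j = 0) ->
  (0 < #|K|)%N -> aff_indep S #|K|.-1.
Proof.
move=> hsum hS hK hK0.
pose L := \matrix_(i < N, l < #|K|) (if W i then Lv i 0 (enum_val l) else 0).
have hLT : row_free L^T.
  apply/inj_row_free => c hc.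
  pose a j := \sum_l c 0 l * (enum_val l == j)%:R.
  have ha : forall i, W i -> \sum_j a j * Lv i 0 j = 0.
    move=> i wi; move/matrixP: hc => /(_ 0 i); rewrite [LHS]mxE [RHS]mxE => hci.
    rewrite -[RHS]hci.
    under eq_bigr do rewrite mulr_suml.
    rewrite exchange_big /=; apply: eq_bigr => l _.
    rewrite !mxE wi (bigD1 (enum_val l)) //= eqxx mulr1 big1 ?addr0 // => j hj.
    by rewrite eq_sym (negPf hj) mulr0 mul0r.
  apply/rowP => l; rewrite mxE; have := hK a ha (enum_val l) (enum_valP l).
  rewrite /a (bigD1 l) //= eqxx mulr1 big1 ?addr0 // => l' hl'.
  by rewrite (inj_eq enum_val_inj) (negPf hl') mulr0.
have hrk : \rank L = #|K| by rewrite -mxrank_tr; apply/eqP.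
have gen : forall p (tau : 'I_p -> 'I_N),
    row_free (\matrix_(l < p) Lv (tau l)) -> (forall l, W (tau l)) ->
    (0 < p)%N -> aff_indep S p.-1.
  case => // k tau hf hW _ /=.
  exists (\matrix_(l < k.+1) rsubmx (Lv (tau l))); split.
    by move=> l; rewrite rowK; apply: hS.
  rewrite D_E free_D_Y.
  have -> : Ymx (\matrix_(l < k.+1) rsubmx (Lv (tau l))) =
            \matrix_(l < k.+1) Lv (tau l).
    by apply/row_matrixP => l; rewrite row_Ymx !rowK YK // hsum.
  exact: hf.
move: (maxrankfun L) (maxrowsub_free L); rewrite hrk => sigma hs.
have hW : forall l, W (sigma l).
  move=> l; apply/negPn/negP => nw.
  have : (delta_mx 0 l : 'rV[R]_#|K|) *m rowsub sigma L == 0.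
    rewrite -rowE row_rowsub; apply/eqP/rowP => l'.
    by rewrite !mxE (negPf nw).
  rewrite mulmx_free_eq0 // => /eqP /matrixP /(_ 0 l) /eqP.
  by rewrite !mxE !eqxx oner_eq0.
apply: (gen _ sigma) => //.
have e : \matrix_(l < #|K|) Lv (sigma l) *m S1 R K = rowsub sigma L.
  by apply/matrixP => l l'; rewrite mulS1 !mxE hW.
apply/inj_row_free => w hw; apply/eqP.
by rewrite -(mulmx_free_eq0 _ hs) -e mulmxA hw mul0mx.
Qed.

End LB.


Section Vert.
Variables (R : realType) (m n : nat) (V : seq 'rV[R]_m).
Variables (f : 'rV[R]_m -> 'rV[R]_n) (A : 'M[R]_(m,n)) (b : 'rV[R]_n).
Hypothesis hf : forall x, f x = x *m A + b.

Lemma Yf x : Y (f x) = x *m (A *m Mn R n) + (b *m Mn R n + y0 R n).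
Proof. by rewrite hf /Y mulmxDl mulmxA addrA. Qed.

Lemma rsubD (u v : 'rV[R]_(1+n)) : rsubmx (u + v) = rsubmx u + rsubmx v.
Proof. by apply/rowP => j; rewrite !mxE. Qed.

Lemma rsub_Mn (u : 'rV[R]_(1+n)) : \sum_j u 0 j = 0 -> rsubmx u *m Mn R n = u.
Proof.
move=> hs.
have hy : \sum_j y0 R n 0 j = 1.
  by have := Ysum (0 : 'rV[R]_n); rewrite /Y mul0mx add0r.
have h1 : \sum_j (u + y0 R n) 0 j = 1.
  rewrite (eq_bigr (fun j => u 0 j + y0 R n 0 j)); last by move=> j _; rewrite mxE.
  by rewrite big_split /= hs hy add0r.
have := YK h1; rewrite rsubD.
have -> : rsubmx (y0 R n) = 0 by rewrite /y0 row_mxKr.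
by rewrite addr0 /Y => /addIr.
Qed.

Lemma Rs_rsub (u : 'rV[R]_(1+n)) : u *m col_mx 0 1%:M = rsubmx u.
Proof. by rewrite -{1}(hsubmxK u) mul_row_col mulmx0 add0r mulmx1. Qed.

Lemma vert_lemma : is_vert (conv V) (@simplex R n) f ->
  forall (a : 'I_(1+n) -> R) (j1 : 'I_(1+n)) (C : R), 0 <= C ->
  (forall i : 'I_(size V), `|\sum_j a j * Y (f V`_i) 0 j| <= C * Y (f V`_i) 0 j1) ->
  forall j (i : 'I_(size V)),
    a j * Y (f V`_i) 0 j = (j == j1)%:R * \sum_k a k * Y (f V`_i) 0 k.
Proof.
move=> [[_ hP] hv] a j1 C C0 hC.
pose Q : 'M[R]_(1+n) :=
  \matrix_(k, j) (a k * (k == j)%:R - a k * (j == j1)%:R).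
pose phi x := \sum_k a k * Y (f x) 0 k.
pose hvec x := Y (f x) *m Q.
have hvecE x j : hvec x 0 j = a j * Y (f x) 0 j - (j == j1)%:R * phi x.
  rewrite /hvec [LHS]mxE; under eq_bigr do rewrite [Q _ _]mxE mulrBr.
  rewrite sumrB (bigD1 j) //= eqxx mulr1 big1 ?addr0; last first.
    by move=> k /negPf ->; rewrite mulr0 mulr0.
  rewrite /phi mulr_sumr mulrC; congr (_ - _); apply: eq_bigr => k _.
  ring.
have hvsum x : \sum_j hvec x 0 j = 0.
  under eq_bigr do rewrite hvecE.
  rewrite sumrB [X in _ - X](bigD1 j1) //= eqxx mul1r.
  rewrite [X in _ - (_ + X)]big1 ?addr0 ?subrr //.
  by move=> k /negPf ->; rewrite mul0r.
pose H x := hvec x *m col_mx 0 1%:M.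
have HE x : H x = rsubmx (hvec x) by rewrite /H Rs_rsub.
have Haff x : H x = x *m (A *m Mn R n *m Q *m col_mx 0 1%:M)
                    + (b *m Mn R n + y0 R n) *m Q *m col_mx 0 1%:M.
  by rewrite /H /hvec Yf !mulmxDl !mulmxA.
have HMn x : H x *m Mn R n = hvec x by rewrite HE rsub_Mn.
have lge0 x : conv V x -> forall j, 0 <= Y (f x) 0 j.
  by move=> hx; apply/sim_iff; apply: hP; exists x.
have Yge x (u : 'cV[R]_(1+n)) : conv V x ->
    (forall i : 'I_(size V), 0 <= (Y (f V`_i) *m u) 0 0) -> 0 <= (Y (f x) *m u) 0 0.
  move=> hx hi; rewrite Yf mulmxDl -mulmxA; apply: conv_ge0 hx => i.
  by rewrite mulmxA -mulmxDl -Yf.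
have sE z s : (Y z *m \col_k (C * (k == j1)%:R + s * a k)) 0 0
     = C * Y z 0 j1 + s * \sum_k a k * Y z 0 k.
  rewrite [LHS]mxE; under eq_bigr do rewrite [(\col__ _) _ _]mxE mulrDr.
  rewrite big_split /= (bigD1 j1) //= eqxx mulr1 big1 ?addr0; last first.
    by move=> k /negPf ->; rewrite mulr0 mulr0.
  rewrite mulr_sumr; congr (_ + _); first by rewrite mulrC.
  by apply: eq_bigr => k _; ring.
have phiB x : conv V x -> `|phi x| <= C * Y (f x) 0 j1.
  move=> hx; apply/ler_normlP; split.
  - rewrite -subr_ge0 opprK.
    have := Yge x (\col_k (C * (k == j1)%:R + 1 * a k)) hx.
    rewrite sE mul1r; apply => i; rewrite sE mul1r.
    by have /ler_normlP [h1 _] := hC i; rewrite -subr_ge0 opprK in h1.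
  - rewrite -subr_ge0.
    have := Yge x (\col_k (C * (k == j1)%:R + (-1) * a k)) hx.
    rewrite sE mulN1r; apply => i; rewrite sE mulN1r.
    by have /ler_normlP [_ h2] := hC i; rewrite subr_ge0.
pose T := 1 + C + \sum_k `|a k|.
have sa0 : 0 <= \sum_k `|a k| by apply: sumr_ge0 => k _.
have T0 : 0 < T by rewrite /T; lra.
pose e := T^-1.
have e0 : 0 < e by rewrite invr_gt0.
have eb j : e * (`|a j| + C) <= 1.
  rewrite mulrC ler_pdivrMr // mul1r /T (bigD1 j) //=.
  have : 0 <= \sum_(k | k != j) `|a k| by apply: sumr_ge0 => k _.
  lra.
have Yg x s : Y (f x + s *: H x) = Y (f x) + s *: hvec x.
  by rewrite /Y mulmxDl -scalemxAl HMn addrAC.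
have gsim x s : conv V x -> `|s| = e -> simplex (f x + s *: H x).
  move=> hx hs; apply/sim_iff => j.
  rewrite Yg mxE [(s *: hvec x) _ _]mxE hvecE.
  have l0 := lge0 x hx j; have l1 := lge0 x hx j1.
  have /ler_normlP [p1 p2] := phiB x hx.
  have /ler_normlP [a1 a2] := lexx `|a j|.
  have /ler_normlP [s1 s2] := lexx `|s|.
  have ebj := eb j.
  rewrite hs in s1 s2.
  have f1 : 0 <= e * Y (f x) 0 j * (`|a j| + a j).
    by apply: mulr_ge0; [apply: mulr_ge0 => //; exact: ltW | lra].
  have f2 : 0 <= e * Y (f x) 0 j * (`|a j| - a j).
    by apply: mulr_ge0; [apply: mulr_ge0 => //; exact: ltW | lra].
  have f3 : 0 <= Y (f x) 0 j * (1 - e * (`|a j| + C)).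
    by apply: mulr_ge0 => //; lra.
  have f4 : 0 <= e * (C * Y (f x) 0 j1 - phi x) by apply: mulr_ge0; [exact: ltW | lra].
  have f5 : 0 <= e * (C * Y (f x) 0 j1 + phi x) by apply: mulr_ge0; [exact: ltW | lra].
  have f6 : 0 <= e * C * Y (f x) 0 j by apply: mulr_ge0 => //; apply: mulr_ge0 => //; exact: ltW.
  have [se|se] : s = e \/ s = - e.
    by move: hs; case: (ger0P s) => _ h; [left | right; rewrite -h opprK].
  - case: eqP => hj; rewrite ?mul1r ?mul0r ?subr0 se.
      rewrite -hj in f4 f5 *; nra.
    nra.
  - case: eqP => hj; rewrite ?mul1r ?mul0r ?subr0 se.
      rewrite -hj in f4 f5 *; nra.
    nra.
have gHom s : `|s| = e -> in_Hom (conv V) (@simplex R n) (fun x => f x + s *: H x).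
  move=> hs; split.
    exists (A + s *: (A *m Mn R n *m Q *m col_mx 0 1%:M)).
    exists (b + s *: ((b *m Mn R n + y0 R n) *m Q *m col_mx 0 1%:M)).
    move=> x; rewrite hf Haff mulmxDr -scalemxAr scalerDr.
    by rewrite addrACA.
  by move=> z [x hx <-]; apply: gsim.
have ne : `|e| = e by rewrite ger0_norm // ltW.
have nne : `|- e| = e by rewrite normrN.
have hgh := hv _ _ (2^-1) (gHom e ne) (gHom (- e) nne).
have H0 x : conv V x -> H x = 0.
  move=> hx; have := hgh _ _ _ x hx.
  have t0 : (0 : R) < 2^-1 by rewrite invr_gt0 ltr0n.
  have t1 : (2^-1 : R) < 1 by rewrite invf_lt1 ?ltr0n ?ltr1n.
  move=> /(_ t0 t1) heq.
  have {}heq : f x + e *: H x = f x + - e *: H x.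
    apply: heq => y hy.
    have -> : (1 - 2^-1 : R) = 2^-1.
      by lra.
    rewrite -scalerDr addrACA scaleNr subrr addr0.
    rewrite -{2 3}[f y]scale1r -scalerDl scalerA (_ : 2^-1 * (1 + 1) = 1) ?scale1r //; lra.
  move/addrI: heq => heq.
  have : (e + e) *: H x == 0 by rewrite scalerDl {1}heq scaleNr addNr.
  rewrite scaler_eq0 => /orP [|/eqP //].
  by move=> /eqP he; exfalso; lra.
move=> j i.
have hx := mem_conv i.
have := HMn V`_i; rewrite H0 // mul0mx => /esym /rowP /(_ j).
rewrite hvecE [RHS]mxE => /eqP; rewrite subr_eq0 => /eqP ->.
by [].
Qed.

End Vert.


Lemma aff_indep_sub (R : realType) n (S T : set 'rV[R]_n) k :
  S `<=` T -> aff_indep S k -> aff_indep T k.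
Proof. by move=> hST [X [hX hf]]; exists X; split => // i; apply: hST. Qed.

Lemma int_aux (p q : nat) : p%:Z - 1 - 1 <= q%:Z - 1 -> (p <= q.+1)%N.
Proof.
move=> h; have h2 : (p%:Z <= q%:Z + 1) by lra.
by move: h2; rewrite -PoszD lez_nat addn1.
Qed.

Lemma int_aux2 (x : int) : x = x - 1 -> False.
Proof. move=> h; lra. Qed.

Lemma int_aux3 (a : nat) : a%:Z - 1 = (true + a)%N%:Z - 1 - 1.
Proof. rewrite PoszD /=; lra. Qed.

Unset Implicit Arguments.

Theorem lemma3p3 (R : realType) (m n : nat) (V : seq 'rV[R]_m)
  (f : 'rV[R]_m -> 'rV[R]_n) :
  is_vert (conv V) (@simplex R n) f ->
  exists G : set 'rV[R]_n,
    face (@simplex R n) G /\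
    adim (f @` conv V) = adim G /\
    f @` conv V `<=` G /\
    (forall F, facet G F -> exists F', facet (f @` conv V) F' /\ F' `<=` F).
Proof.
move=> hv; have [[[A [b hf]] hP] _] := hv.
have lge x : conv V x -> forall j, 0 <= Y (f x) 0 j.
  by move=> hx; apply/sim_iff; apply: hP; exists x.
pose J : {set 'I_(1+n)} := finset (fun j => [exists i : 'I_(size V), Y (f V`_i) 0 j != 0]).
have notJ j : j \notin J -> forall i : 'I_(size V), Y (f V`_i) 0 j = 0.
  by rewrite /J finset.inE negb_exists => /forallP hj i; move: (hj i); rewrite negbK => /eqP.
have inJ j : j \in J -> exists i : 'I_(size V), Y (f V`_i) 0 j != 0.
  by rewrite /J finset.inE => /existsP.
have lJ0 x : conv V x -> forall j, j \notin J -> Y (f x) 0 j = 0.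
  move=> hx j hj; rewrite (Yf hf); apply: conv_eq0 hx => i.
  by rewrite -(Yf hf); apply: notJ.
pose G := [set z : 'rV[R]_n | simplex z /\ forall j, j \notin J -> Y z 0 j = 0].
have fPG : f @` conv V `<=` G.
  move=> z [x hx <-]; split; first by apply: hP; exists x.
  exact: lJ0.
have UBf k : aff_indep (f @` conv V) k -> (k < #|J|)%N.
  by apply: UB => z [x hx <-]; apply: lJ0.
have UBG k : aff_indep G k -> (k < #|J|)%N.
  by apply: UB => z [].
have LBf : (0 < #|J|)%N -> aff_indep (f @` conv V) #|J|.-1.
  apply: (@LB_lin R n _ _ (fun i => Y (f V`_i)) predT).
  - by move=> i _; apply: Ysum.
  - by move=> i _; rewrite rsubY; exists V`_i => //; apply: mem_conv.
  move=> a ha j hj.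
  have hz := @vert_lemma R m n V f A b hf hv a j 0 (lexx _).
  have [i hi] := inJ j hj.
  have hz' : forall j' (i' : 'I_(size V)), a j' * Y (f V`_i') 0 j' = 0.
    move=> j' i'; rewrite hz ?ha ?mulr0 // => i''.
    by rewrite ha // normr0 mul0r.
  by move: (hz' j i) => /eqP; rewrite mulf_eq0 (negPf hi) orbF => /eqP.
have adimf : adim (f @` conv V) = #|J|%:Z - 1 by apply: adimE.
have adimG : adim G = #|J|%:Z - 1.
  apply: adimE => // hJ; apply: aff_indep_sub fPG _; exact: LBf.
have hface : face (@simplex R n) G.
  pose chi : 'cV[R]_(1+n) := \col_j (j \notin J)%:R.
  exists (- (Mn R n *m chi)), ((y0 R n *m chi) 0 0).
  have psi0 z : (z *m - (Mn R n *m chi)) 0 0 = (y0 R n *m chi) 0 0 - (Y z *m chi) 0 0.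
    by rewrite /Y mulmxDl mulmxN mulmxA [LHS]mxE [X in _ - X]mxE; lra.
  have Ychi z : (Y z *m chi) 0 0 = \sum_j Y z 0 j * (j \notin J)%:R.
    by rewrite [LHS]mxE; apply: eq_bigr => j _; rewrite [chi _ _]mxE.
  split.
    move=> z /sim_iff hz; rewrite psi0 gerBl Ychi.
    by apply: sumr_ge0 => j _; rewrite mulr_ge0 ?ler0n.
  apply/seteqP; split => z /=.
    case=> hz hJ; split => //; rewrite psi0 Ychi big1 ?subr0 //.
    by move=> j _; case hj: (j \in J) => /=; rewrite ?mulr0 // hJ ?hj // mul0r.
  case=> hz; rewrite psi0 => h.
  have : (Y z *m chi) 0 0 = 0 by lra.
  rewrite Ychi => h0; split => // j hj.
  have := (psumr_eq0P _ h0) j isT.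
  have hz' := (proj1 (sim_iff z) hz).
  rewrite hj mulr1; apply => i _; rewrite mulr_ge0 ?ler0n //.
exists G; split => //; split; first by rewrite adimf adimG.
split => // F [[c [bb [hcG hF]]] hdim].
pose Rs : 'M[R]_(1+n, n) := col_mx 0 1%:M.
pose w j := (Rs *m c) j 0.
pose psi (z : 'rV[R]_n) := (z *m c) 0 0.
have psiE z : psi z = \sum_j Y z 0 j * w j.
  by rewrite /psi -{1}(rsubY z) -Rs_rsub -mulmxA mxE.
have psiB z : bb - psi z = \sum_j Y z 0 j * (bb - w j).
  rewrite psiE; under [RHS]eq_bigr do rewrite mulrBr.
  by rewrite sumrB -mulr_suml Ysum mul1r.
pose e (j : 'I_(1+n)) : 'rV[R]_n := rsubmx (delta_mx 0 j).
have Ye j : Y (e j) = delta_mx 0 j.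
  apply: YK; rewrite (bigD1 j) //= mxE !eqxx big1 ?addr0 // => k hk.
  by rewrite mxE (negPf hk) andbF.
have eG j : j \in J -> G (e j).
  move=> hj; split.
    by apply/sim_iff => k; rewrite Ye mxE ler0n.
  move=> k hk; rewrite Ye mxE eqxx /=; case: eqP => // hjk.
  by move: hk; rewrite hjk hj.
have psie j : psi (e j) = w j.
  rewrite psiE (bigD1 j) //= Ye mxE !eqxx mul1r big1 ?addr0 // => k hk.
  by rewrite mxE (negPf hk) andbF mul0r.
have wJ j : j \in J -> w j <= bb by move=> hj; rewrite -psie; apply: hcG; apply: eG.
pose K : {set 'I_(1+n)} := finset (fun j => (j \in J) && (w j == bb)).
have hKJ : K \subset J by apply/fintype.subsetP => j; rewrite finset.inE => /andP [].
have Gterm z : G z -> forall j, 0 <= Y z 0 j * (bb - w j).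
  move=> [hz hJ] j; case hj: (j \in J).
    by rewrite mulr_ge0 ?subr_ge0 ?wJ //; exact: (proj1 (sim_iff z) hz j).
  by rewrite hJ ?hj // mul0r.
have FK z : F z -> forall j, j \notin K -> Y z 0 j = 0.
  rewrite hF => -[hzG hzb] j hjK.
  have h0 : \sum_j Y z 0 j * (bb - w j) = 0 by rewrite -psiB /psi hzb subrr.
  have := (psumr_eq0P (fun j _ => Gterm z hzG j) h0) j isT.
  move/eqP; rewrite mulf_eq0 => /orP [/eqP //|].
  rewrite subr_eq0 => /eqP hw; case hj: (j \in J); last by apply: hzG.2; rewrite hj.
  by move: hjK; rewrite finset.inE hj hw eqxx.
have hcard : (#|J| <= #|K|.+1)%N.
  have := adim_le (fun k hk => UB FK hk); rewrite hdim adimG => h.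
  exact: int_aux h.
have Gb z : G z -> (forall j, j \in J -> j \notin K -> Y z 0 j = 0) -> psi z = bb.
  move=> hzG hj.
  have : \sum_j Y z 0 j * (bb - w j) = 0.
    apply: big1 => j _; case hjJ: (j \in J); last by rewrite hzG.2 ?hjJ // mul0r.
    case hjK: (j \in K); last by rewrite hj ?hjK // mul0r.
    by move: hjK; rewrite finset.inE hjJ => /eqP ->; rewrite subrr mulr0.
  by rewrite -psiB => /eqP; rewrite subr_eq0 => /eqP <-.
have hKne : K != J.
  apply/negP => /eqP hKJ'.
  have FG : F = G.
    rewrite hF; apply/seteqP; split => z; first by case.
    move=> hz; split => //; apply: (Gb z hz) => j hj.
    by rewrite hKJ' hj.
  by move: hdim; rewrite FG; apply: int_aux2.
have [j0 hj0J hj0K] : exists2 j0, j0 \in J & j0 \notin K.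
  have : K \proper J by rewrite finset.properEneq hKne hKJ.
  by case/properP => _ [x hx hxK]; exists x.
have hKD : K = J :\ j0.
  apply/eqP; rewrite eqEcard; apply/andP; split.
    apply/fintype.subsetP => j hj.
    rewrite finset.inE (fintype.subsetP hKJ j hj) andbT.
    by rewrite finset.in_set1; apply/negP => /eqP hjj; move: hj0K; rewrite -hjj hj.
  have := cardsD1 j0 J; rewrite hj0J => ec.
  by move: hcard; rewrite ec.
pose F' := f @` conv V `&` [set z | (z *m c) 0 0 = bb].
have F'F : F' `<=` F by move=> z [hz hb]; rewrite hF; split => //; exact: fPG.
have cJ : #|J| = (true + #|J :\ j0|)%N by have := cardsD1 j0 J; rewrite hj0J.
exists F'; split => //; split.
  exists c, bb; split => //; move=> z hz; apply: hcG; exact: fPG.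
rewrite adimf cJ -int_aux3.
apply: adimE.
  by move=> k; rewrite -hKD; apply: UB => z /F'F; apply: FK.
apply: (@LB_lin R n _ _ (fun i => Y (f V`_i)) (fun i => Y (f V`_i) 0 j0 == 0)).
- by move=> i _; apply: Ysum.
- move=> i /eqP hi; rewrite rsubY; split; first by exists V`_i => //; apply: mem_conv.
  apply: Gb; first by apply: fPG; exists V`_i => //; apply: mem_conv.
  move=> j hjJ hjK; move: hjK; rewrite hKD finset.in_setD1 hjJ andbT negbK.
  by move/eqP ->.
move=> a ha j; rewrite finset.in_setD1 => /andP [hjj0 hjJ].
pose phi (i : 'I_(size V)) := \sum_k a k * Y (f V`_i) 0 k.
pose C := \sum_(i : 'I_(size V)) `|phi i| / Y (f V`_i) 0 j0.
have C0 : 0 <= C.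
  by apply: sumr_ge0 => i _; rewrite divr_ge0 ?normr_ge0 ?lge //; apply: mem_conv.
have hb : forall i : 'I_(size V), `|phi i| <= C * Y (f V`_i) 0 j0.
  move=> i; case hW: (Y (f V`_i) 0 j0 == 0).
    by rewrite /phi ha ?hW // normr0 (eqP hW) mulr0.
  have yp : 0 < Y (f V`_i) 0 j0.
    by rewrite lt_def hW /= lge //; apply: mem_conv.
  have -> : `|phi i| = `|phi i| / Y (f V`_i) 0 j0 * Y (f V`_i) 0 j0.
    by rewrite divfK // hW.
  apply: ler_wpM2r; first exact: ltW.
  rewrite /C (bigD1 i) //= lerDl; apply: sumr_ge0 => i' _.
  by rewrite divr_ge0 ?normr_ge0 ?lge //; apply: mem_conv.
have hz := @vert_lemma R m n V f A b hf hv a j0 C C0 hb.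
have [i hi] := inJ j hjJ.
move: (hz j i); rewrite (negPf hjj0) mul0r => /eqP.
by rewrite mulf_eq0 (negPf hi) orbF => /eqP.
Qed.
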